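(* Let $\bm v_1, \dots, \bm v_N \in \mathbb{R}^{r}$, let $\bm X := \mathsf{Gram}(\bm v_1, \dots, \bm v_N)$, let $\bm V \in \mathbb{R}^{r \times N}$ have columns $\bm v_1,\dots,\bm v_N$, and let $\bm v := \mathrm{vec}(\bm V) \in \mathbb{R}^{rN}$. Then $\bm X \in \mathscr{E}_4^N$ if and only if $\sum_{i=1}^N \|\bm v_i\|_2^2 = N$ and there exists $\bm M \in \mathcal{B}(N, r)$ with $\bm v^\top \bm M \bm v = N^2$. Moreover: (a) if $\bm X \in \mathscr{E}_4^N$ and $\bm Y$ is any degree 4 pseudomoment matrix extending $\bm X$, then there exists $\bm M \in \mathcal{B}(N,r)$ with $\bm v^\top \bm M \bm v = N^2$ and $$Y_{(ij)(k\ell)} = \bm v_i^\top \bm M_{[jk]} \bm v_\ell \quad \text{for all } i,j,k,\ell \in [N].$$ (b) Conversely, if $\sum_{i=1}^N\|\bm v_i\|_2^2 = N$ and $\bm M \in \mathcal{B}(N,r)$ satisfies $\bm v^\top \bm M \bm v = N^2$, then the matrix $\bm Y \in \mathbb{R}^{N^2\times N^2}$ with entries $Y_{(ij)(k\ell)} := \bm v_i^\top \bm M_{[jk]} \bm v_\ell$ is a degree 4 pseudomoment matrix extending $\bm X$.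
   Context: $[N] = \{1,\dots,N\}$. For $\bm v_1,\dots,\bm v_N$, $\mathsf{Gram}(\bm v_1,\dots,\bm v_N)$ is the $N\times N$ matrix with entries $\langle \bm v_i, \bm v_j\rangle$. For $\bm V \in \mathbb{R}^{r\times N}$ with columns $\bm v_i$, $\mathrm{vec}(\bm V) \in \mathbb{R}^{rN}$ is the concatenation $(\bm v_1; \dots; \bm v_N)$. A matrix $\bm M \in \mathbb{R}^{rN\times rN}$ is viewed as an $N\times N$ array of $r\times r$ blocks, $\bm M_{[ij]}$ denoting block $(i,j)$. $\mathcal{B}(N,r)$ is the set of symmetric $\bm M \in \mathbb{R}^{rN\times rN}$ with $\bm M \succeq 0$, $\bm M_{[ii]} = \bm I_r$ for all $i$, and $\bm M_{[ij]} = \bm M_{[ij]}^\top$ for all $i,j$. A degree 4 pseudomoment matrix is a matrix $\bm Y \in \mathbb{R}^{N^2\times N^2}$, rows and columns indexed by pairs $(ij)\in[N]^2$ (lexicographically ordered), such that: (1) $\bm Y\succeq 0$; (2) $Y_{(ij)(kk)}$ does not depend on $k$; (3) $Y_{(ii)(ii)} = 1$ for all $i$; (4) $Y_{(ij)(k\ell)}$ is invariant under all permutations of the four indices $i,j,k,\ell$. Such $\bm Y$ extends $\bm X\in\mathbb{R}^{N\times N}_{\mathrm{sym}}$ if $Y_{(1i)(1j)} = X_{ij}$ for all $i,j$. $\mathscr{E}_4^N$ is the set of symmetric $\bm X \in \mathbb{R}^{N\times N}$ that are extended by some degree 4 pseudomoment matrix. *)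

(* Defs.v *)
(* Real numbers are modelled by an arbitrary real closed field
   (rcfType). *)
From HB Require Import structures.
From mathcomp Require Import all_boot all_order all_algebra all_fingroup.
Set Implicit Arguments. Unset Strict Implicit. Unset Printing Implicit Defensive.
Import Order.TTheory GRing.Theory Num.Theory.
Local Open Scope ring_scope.

Definition psd (R : rcfType) (n : nat) (A : 'M[R]_n) : Prop :=
  forall x : 'cV[R]_n, 0 <= (x^T *m A *m x) 0 0.

(* Double-indexed entry of a matrix indexed by pairs; the pair (i,j)
   corresponds to mxvec_index i j (lexicographic order). *)
Definition Yent (R : rcfType) (N : nat) (Y : 'M[R]_(N * N)) (i j k l : 'I_N) : R :=
  Y (mxvec_index i j) (mxvec_index k l).

Definition i4 (k : nat) : 'I_4 := inord k.

Definition pseudomoment (R : rcfType) (N : nat) (Y : 'M[R]_(N * N)) : Prop :=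
  [/\ psd Y,
      (forall i j k k' : 'I_N, Yent Y i j k k = Yent Y i j k' k'),
      (forall i : 'I_N, Yent Y i i i i = 1) &
      (forall (f : 'I_4 -> 'I_N) (s : {perm 'I_4}),
         Yent Y (f (s (i4 0))) (f (s (i4 1))) (f (s (i4 2))) (f (s (i4 3)))
         = Yent Y (f (i4 0)) (f (i4 1)) (f (i4 2)) (f (i4 3)))].

(* Y extends X: Y_{(1i)(1j)} = X_{ij}, index 1 = the first element of [N]. *)
Definition extends (R : rcfType) (N : nat) (Y : 'M[R]_(N * N)) (X : 'M[R]_N) : Prop :=
  forall (o i j : 'I_N), val o = 0%N -> Yent Y o i o j = X i j.

Definition E4 (R : rcfType) (N : nat) (X : 'M[R]_N) : Prop :=
  X^T = X /\ exists Y : 'M[R]_(N * N), pseudomoment Y /\ extends Y X.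

(* Block (i,j) (an r x r matrix) of a matrix of size rN; the rN indices are
   ordered as (i,a) |-> mxvec_index i a, i.e. i*r + a. *)
Definition blk (R : rcfType) (N r : nat) (M : 'M[R]_(N * r)) (i j : 'I_N) : 'M[R]_r :=
  \matrix_(a, b) M (mxvec_index i a) (mxvec_index j b).

Definition inB (R : rcfType) (N r : nat) (M : 'M[R]_(N * r)) : Prop :=
  [/\ M^T = M, psd M,
      (forall i : 'I_N, blk M i i = 1%:M) &
      (forall i j : 'I_N, (blk M i j)^T = blk M i j)].

(* vec(V) = (v_1; ...; v_N) for V with columns v_i. *)
Definition vecV (R : rcfType) (r N : nat) (V : 'M[R]_(r, N)) : 'cV[R]_(N * r) :=
  (mxvec V^T)^T.

(* Main.v *)
Require Import Defs.
From HB Require Import structures.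
From mathcomp Require Import all_boot all_order all_algebra all_fingroup.
From mathcomp Require Import ring.
Set Implicit Arguments. Unset Strict Implicit. Unset Printing Implicit Defensive.
Import Order.TTheory GRing.Theory Num.Theory.
Local Open Scope ring_scope.

Definition up (m n : nat) (x : 'I_(m*n)) : 'I_m * 'I_n :=
  enum_val (cast_ord (esym (mxvec_cast m n)) x).

Lemma upE m n (i : 'I_m) (j : 'I_n) : up (mxvec_index i j) = (i, j).
Proof. by rewrite /up /mxvec_index cast_ordK enum_rankK. Qed.

Lemma sum_pair (R : rcfType) m n (F : 'I_(m*n) -> R) :
  \sum_x F x = \sum_i \sum_j F (mxvec_index i j).
Proof.
rewrite (reindex _ (curry_mxvec_bij _ _)) /= pair_bigA /=.
by apply: eq_bigr => -[i j].
Qed.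

Lemma sum_delta (R : rcfType) n (j : 'I_n) (F : 'I_n -> R) :
  \sum_k (k == j)%:R * F k = F j.
Proof.
rewrite (bigD1 j) //= eqxx mul1r big1 ?addr0 // => k /negbTE->; by rewrite mul0r.
Qed.

Lemma sum_delta' (R : rcfType) n (j : 'I_n) (F : 'I_n -> R) :
  \sum_k (j == k)%:R * F k = F j.
Proof. by rewrite -(sum_delta j); apply: eq_bigr => k _; rewrite eq_sym. Qed.

Lemma tri_entry (R : rcfType) m n p q (A : 'M[R]_(m, n)) (B : 'M_(m, p)) (C : 'M_(p, q)) x y :
  (A^T *m B *m C) x y = \sum_i \sum_j A i x * B i j * C j y.
Proof.
rewrite mxE exchange_big; apply: eq_bigr => j _; rewrite mxE mulr_suml.
by apply: eq_bigr => i _; rewrite mxE.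
Qed.

Lemma quadE (R : rcfType) n (A : 'M[R]_n) (x : 'cV_n) :
  (x^T *m A *m x) 0 0 = \sum_i \sum_j x i 0 * A i j * x j 0.
Proof. by rewrite tri_entry. Qed.

Lemma psd_congr (R : rcfType) m n (A : 'M[R]_m) (B : 'M_(m, n)) :
  psd A -> psd (B^T *m A *m B).
Proof.
move=> pA x; rewrite -!mulmxA !mulmxA -trmx_mul -mulmxA; exact: pA.
Qed.

Lemma psd_congr' (R : rcfType) m n (A : 'M[R]_m) (B : 'M_(n, m)) :
  psd A -> psd (B *m A *m B^T).
Proof. by move=> pA; rewrite -{1}(trmxK B); apply: psd_congr. Qed.

Lemma psdD (R : rcfType) n (A B : 'M[R]_n) : psd A -> psd B -> psd (A + B).
Proof.
by move=> pA pB x; rewrite mulmxDr mulmxDl mxE addr_ge0.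
Qed.

Lemma sqr0 (R : rcfType) n (x : 'cV[R]_n) : (x^T *m x) 0 0 = 0 -> x = 0.
Proof.
rewrite mxE => /eqP; rewrite psumr_eq0 => [/allP H|i _]; last first.
  by rewrite mxE -expr2 sqr_ge0.
apply/matrixP => i j; rewrite ord1 mxE; have := H i (mem_index_enum _).
by rewrite mxE -expr2 sqrf_eq0 => /eqP.
Qed.

Lemma ker_psd (R : rcfType) n (A : 'M[R]_n) : A^T = A -> psd A ->
  forall x : 'cV_n, (x^T *m A *m x) 0 0 = 0 -> A *m x = 0.
Proof.
move=> sA pA x qx; set y := A *m x.
have sym : (x^T *m A *m y) 0 0 = (y^T *m A *m x) 0 0.
  have -> : (x^T *m A *m y) 0 0 = ((x^T *m A *m y)^T) 0 0 by rewrite [RHS]mxE.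
  by rewrite !trmx_mul trmxK sA mulmxA.
have E t : ((x + t *: y)^T *m A *m (x + t *: y)) 0 0 =
   (x^T *m A *m x) 0 0 + 2 * t * (y^T *m A *m x) 0 0 + t ^+ 2 * (y^T *m A *m y) 0 0.
  have -> : (x + t *: y)^T = x^T + t *: y^T by apply/matrixP=> i j; rewrite !mxE.
  rewrite !mulmxDl !mulmxDr -!scalemxAl -!scalemxAr.
  idtac.
  rewrite scalerA; set P := x^T *m A *m x; set Q1 := x^T *m A *m y.
  set Q2 := y^T *m A *m x; set S := y^T *m A *m y.
  have sym2 := sym; rewrite !mxE in sym2; rewrite !mxE /= sym2; ring.
set b := (y^T *m A *m x) 0 0; set c := (y^T *m A *m y) 0 0.
have hb : b = (y^T *m y) 0 0 by rewrite /b -mulmxA.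
have c0 : 0 <= c by apply: pA.
have b0 : 0 <= b by rewrite hb mxE sumr_ge0 // => i _; rewrite mxE -expr2 sqr_ge0.
have := pA (x + (- b / (c + 1)) *: y); rewrite E qx add0r => H.
have c1 : 0 < c + 1 by rewrite ltr_wpDl.
have : b ^+ 2 * (c + 2) <= 0.
  have := mulr_ge0 H (ltW (mulr_gt0 c1 c1)).
  have -> : (2 * (- b / (c + 1)) * b + (- b / (c + 1)) ^+ 2 * c) * ((c + 1) * (c + 1))
     = - (b ^+ 2 * (c + 2)).
    field; by rewrite gt_eqF.
  by rewrite oppr_ge0.
move=> H2; apply: sqr0; rewrite -hb.
have : b ^+ 2 * (c + 2) == 0.
  by rewrite eq_le H2 mulr_ge0 ?sqr_ge0 // addr_ge0.
by rewrite mulf_eq0 sqrf_eq0 => /orP [/eqP//|]; rewrite gt_eqF // ltr_wpDl.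
Qed.

Lemma sum_delta2 (R : rcfType) n m (j : 'I_n) (F : 'I_n -> 'I_m -> R) :
  \sum_p \sum_a (p == j)%:R * F p a = \sum_a F j a.
Proof.
rewrite -(sum_delta j (fun p => \sum_a F p a)); apply: eq_bigr => p _; by rewrite mulr_sumr.
Qed.

Definition Smx (R : rcfType) N r (W : 'M[R]_(r, N)) : 'M[R]_(N * r, N * N) :=
  \matrix_(x, y) (((up x).1 == (up y).2)%:R * W (up x).2 (up y).1).

Lemma SE (R : rcfType) N r (W : 'M[R]_(r, N)) p a i j :
  Smx W (mxvec_index p a) (mxvec_index i j) = (p == j)%:R * W a i.
Proof. by rewrite mxE !upE. Qed.

Definition Emx (R : rcfType) N r : 'M[R]_(r, N * r) :=
  \matrix_(a, y) ((a == (up y).2)%:R).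

Lemma EE (R : rcfType) N r a (j : 'I_N) b :
  Emx R N r a (mxvec_index j b) = (a == b)%:R.
Proof. by rewrite mxE upE. Qed.

Lemma E2 (R : rcfType) N r (W : 'M[R]_(r, N)) (M : 'M[R]_(N * r)) i j k l :
  ((Smx W)^T *m M *m Smx W) (mxvec_index i j) (mxvec_index k l) =
  \sum_a \sum_b W a i * M (mxvec_index j a) (mxvec_index l b) * W b k.
Proof.
rewrite tri_entry sum_pair.
transitivity (\sum_p \sum_a (p == j)%:R * (\sum_q \sum_b (q == l)%:R *
    (W a i * M (mxvec_index p a) (mxvec_index q b) * W b k))).
  apply: eq_bigr => p _; apply: eq_bigr => a _; rewrite sum_pair mulr_sumr.
  apply: eq_bigr => q _; rewrite mulr_sumr; apply: eq_bigr => b _.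
  rewrite !SE; ring.
rewrite sum_delta2; apply: eq_bigr => a _; by rewrite sum_delta2.
Qed.

Lemma E1 (R : rcfType) N r (W : 'M[R]_(r, N)) (Y : 'M[R]_(N * N)) j a k b :
  (Smx W *m Y *m (Smx W)^T) (mxvec_index j a) (mxvec_index k b) =
  \sum_i \sum_l W a i * Yent Y i j l k * W b l.
Proof.
rewrite -{1}(trmxK (Smx W)) tri_entry sum_pair.
transitivity (\sum_i \sum_p (p == j)%:R * (\sum_l \sum_q (q == k)%:R *
    (W a i * Y (mxvec_index i p) (mxvec_index l q) * W b l))).
  apply: eq_bigr => i _; apply: eq_bigr => p _; rewrite sum_pair mulr_sumr.
  apply: eq_bigr => l _; rewrite mulr_sumr; apply: eq_bigr => q _.
  rewrite !mxE !upE /=; rewrite (eq_sym j) (eq_sym k); ring.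
apply: eq_bigr => i _; rewrite sum_delta; apply: eq_bigr => l _.
by rewrite sum_delta.
Qed.

Lemma E3 (R : rcfType) N r (Q : 'M[R]_r) j a k b :
  ((Emx R N r)^T *m Q *m Emx R N r) (mxvec_index j a) (mxvec_index k b) = Q a b.
Proof.
rewrite tri_entry.
transitivity (\sum_p (p == a)%:R * \sum_q (q == b)%:R * Q p q).
  apply: eq_bigr => p _; rewrite mulr_sumr; apply: eq_bigr => q _.
  rewrite !EE; ring.
rewrite sum_delta; apply: sum_delta.
Qed.

Lemma vecVE (R : rcfType) r N (V : 'M[R]_(r, N)) j a :
  vecV V (mxvec_index j a) 0 = V a j.
Proof. by rewrite /vecV mxE mxvecE mxE. Qed.

Lemma quad_vec (R : rcfType) r N (V : 'M[R]_(r, N)) (M : 'M[R]_(N * r)) :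
  ((vecV V)^T *m M *m vecV V) 0 0 =
  \sum_j \sum_k ((col j V)^T *m blk M j k *m col k V) 0 0.
Proof.
rewrite tri_entry sum_pair; apply: eq_bigr => j _.
under eq_bigr => a _ do rewrite sum_pair.
rewrite exchange_big; apply: eq_bigr => k _.
rewrite tri_entry; apply: eq_bigr => a _; apply: eq_bigr => b _.
by rewrite !mxE !mxvecE !mxE.
Qed.

Lemma i4_inj a b : (a < 4)%N -> (b < 4)%N -> (i4 a == i4 b) = (a == b).
Proof.
move=> ha hb; apply/eqP/eqP => [/(congr1 val)|->//].
by rewrite /= !inordK.
Qed.

Lemma tp_i4 a b c : (a < 4)%N -> (b < 4)%N -> (c < 4)%N ->
  tperm (i4 a) (i4 b) (i4 c) = i4 (if c == a then b else if c == b then a else c).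
Proof.
move=> ha hb hc; rewrite permE /= !i4_inj //.
by case: (c == a); case: (c == b).
Qed.

Lemma ord4E (a : 'I_4) : a = i4 a.
Proof. by apply: val_inj; rewrite /= inordK. Qed.

Lemma perm_sym4 (A : Type) N (g : 'I_N -> 'I_N -> 'I_N -> 'I_N -> A) :
  (forall y0 y1 y2 y3, g y0 y1 y2 y3 = g y1 y0 y2 y3) ->
  (forall y0 y1 y2 y3, g y0 y1 y2 y3 = g y2 y1 y0 y3) ->
  (forall y0 y1 y2 y3, g y0 y1 y2 y3 = g y3 y1 y2 y0) ->
  (forall y0 y1 y2 y3, g y0 y1 y2 y3 = g y0 y2 y1 y3) ->
  (forall y0 y1 y2 y3, g y0 y1 y2 y3 = g y0 y3 y2 y1) ->
  (forall y0 y1 y2 y3, g y0 y1 y2 y3 = g y0 y1 y3 y2) ->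
  forall (f : 'I_4 -> 'I_N) (s : {perm 'I_4}),
    g (f (s (i4 0))) (f (s (i4 1))) (f (s (i4 2))) (f (s (i4 3)))
    = g (f (i4 0)) (f (i4 1)) (f (i4 2)) (f (i4 3)).
Proof.
move=> h01 h02 h03 h12 h13 h23.
have Ptp (a b : 'I_4) f : g (f (tperm a b (i4 0))) (f (tperm a b (i4 1)))
    (f (tperm a b (i4 2))) (f (tperm a b (i4 3)))
    = g (f (i4 0)) (f (i4 1)) (f (i4 2)) (f (i4 3)).
  rewrite (ord4E a) (ord4E b).
  case: a b => [[|[|[|[|a]]]] ha] [[|[|[|[|b]]]] hb] //;
  rewrite !tp_i4 //=;
  first [ by [] | by rewrite h01 | by rewrite h02 | by rewrite h03
        | by rewrite h12 | by rewrite h13 | by rewrite h23 ].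
move=> f s; case: (prod_tpermP s) => ts -> _.
elim: ts f => [|t ts IH] f; first by rewrite big_nil !perm1.
rewrite big_cons !permM.
set p := (\prod_(j <- ts) tperm j.1 j.2)%g.
rewrite (Ptp t.1 t.2 (fun x => f (p x))).
exact: IH.
Qed.

Lemma colform (R : rcfType) r N (V : 'M[R]_(r, N)) (B : 'M_r) i l :
  ((col i V)^T *m B *m col l V) 0 0 = (V^T *m B *m V) i l.
Proof. by rewrite !tri_entry; apply: eq_bigr => a _; apply: eq_bigr => b _; rewrite !mxE. Qed.

Lemma addE (R : rcfType) m n (A B : 'M[R]_(m, n)) i j : (A + B) i j = A i j + B i j.
Proof. by rewrite mxE. Qed.
Lemma subE (R : rcfType) m n (A B : 'M[R]_(m, n)) i j : (A - B) i j = A i j - B i j.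
Proof. by rewrite !mxE. Qed.

Definition dv (R : rcfType) N r (i : 'I_N) (u : 'I_r -> R) : 'cV[R]_(N * r) :=
  \col_p (((up p).1 == i)%:R * u (up p).2).

Lemma dvE (R : rcfType) N r (i : 'I_N) (u : 'I_r -> R) p a :
  dv i u (mxvec_index p a) 0 = (p == i)%:R * u a.
Proof. by rewrite mxE upE. Qed.

Lemma bil_dv (R : rcfType) N r (M : 'M[R]_(N * r)) i u j w :
  ((dv i u)^T *m M *m dv j w) 0 0 =
  \sum_a \sum_b u a * M (mxvec_index i a) (mxvec_index j b) * w b.
Proof.
rewrite tri_entry sum_pair.
transitivity (\sum_p \sum_a (p == i)%:R * (\sum_q \sum_b (q == j)%:R *
    (u a * M (mxvec_index p a) (mxvec_index q b) * w b))).
  apply: eq_bigr => p _; apply: eq_bigr => a _; rewrite sum_pair mulr_sumr.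
  apply: eq_bigr => q _; rewrite mulr_sumr; apply: eq_bigr => b _.
  rewrite !dvE; ring.
rewrite sum_delta2; apply: eq_bigr => a _; by rewrite sum_delta2.
Qed.

Lemma mul_dv (R : rcfType) N r (M : 'M[R]_(N * r)) j w p a :
  (M *m dv j w) (mxvec_index p a) 0 =
  \sum_b M (mxvec_index p a) (mxvec_index j b) * w b.
Proof.
rewrite mxE sum_pair.
transitivity (\sum_q \sum_b (q == j)%:R * (M (mxvec_index p a) (mxvec_index q b) * w b)).
  apply: eq_bigr => q _; apply: eq_bigr => b _; rewrite dvE; ring.
by rewrite sum_delta2.
Qed.

Definition bil (R : rcfType) N r (M : 'M[R]_(N * r)) i (u : 'I_r -> R) j (w : 'I_r -> R) :=
  \sum_a \sum_b u a * M (mxvec_index i a) (mxvec_index j b) * w b.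

Lemma quad_dv (R : rcfType) N r (M : 'M[R]_(N * r)) i u j w :
  ((dv i u - dv j w)^T *m M *m (dv i u - dv j w)) 0 0 =
  bil M i u i u - bil M i u j w - bil M j w i u + bil M j w j w.
Proof.
have -> : (dv i u - dv j w)^T = (dv i u)^T - (dv j w)^T.
  by apply/matrixP => x y; rewrite !mxE.
rewrite !mulmxBl !mulmxBr !subE !bil_dv /bil; ring.
Qed.

Lemma zero_dv (R : rcfType) N r (M : 'M[R]_(N * r)) i u j w :
  M^T = M -> psd M -> 
  bil M i u i u - bil M i u j w - bil M j w i u + bil M j w j w = 0 ->
  forall p a, \sum_b M (mxvec_index p a) (mxvec_index i b) * u b =
              \sum_b M (mxvec_index p a) (mxvec_index j b) * w b.
Proof.
move=> sM pM h p a.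
have := ker_psd sM pM (x := dv i u - dv j w); rewrite quad_dv => /(_ h).
move/matrixP => /(_ (mxvec_index p a) 0); rewrite [RHS]mxE mulmxBr subE !mul_dv.
by move/eqP; rewrite subr_eq0 => /eqP.
Qed.

Lemma partB (R : rcfType) N r (V : 'M[R]_(r, N)) (M : 'M[R]_(N * r)) :
  \sum_(i < N) \sum_(a < r) V a i ^+ 2 = N%:R -> inB M ->
  ((vecV V)^T *m M *m vecV V) 0 0 = (N ^ 2)%:R ->
  forall Y : 'M[R]_(N * N),
   (forall i j k l, Yent Y i j k l = ((col i V)^T *m blk M j k *m col l V) 0 0) ->
   pseudomoment Y /\ extends Y (V^T *m V).
Proof.
move=> hn [sM pM dM bM] hv Y hY.
have Msym x y : M y x = M x y by rewrite -{1}sM mxE.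
have Mblk j k a b : M (mxvec_index j a) (mxvec_index k b) = M (mxvec_index j b) (mxvec_index k a).
  by have /matrixP/(_ b a) := bM j k; rewrite !mxE.
have Mdiag j a b : M (mxvec_index j a) (mxvec_index j b) = (a == b)%:R.
  by have /matrixP/(_ a b) := dM j; rewrite !mxE.
have coll j a (u : 'I_r -> R) : \sum_b M (mxvec_index j a) (mxvec_index j b) * u b = u a.
  by under eq_bigr => b _ do rewrite Mdiag; rewrite sum_delta'.
pose vi (i : 'I_N) := fun a : 'I_r => V a i.
pose n (i : 'I_N) := \sum_a V a i ^+ 2.
have hn' : \sum_i n i = N%:R by [].
have Bdiag i u : bil M i u i u = \sum_a u a ^+ 2.
  rewrite /bil; apply: eq_bigr => a _.
  transitivity (u a * \sum_b M (mxvec_index i a) (mxvec_index i b) * u b).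
    rewrite mulr_sumr; apply: eq_bigr => b _; ring.
  by rewrite coll expr2.
have Bsym i j u w : bil M i u j w = bil M j w i u.
  rewrite /bil exchange_big; apply: eq_bigr => b _; apply: eq_bigr => a _.
  rewrite Msym; ring.
have Bsum : \sum_i \sum_j bil M i (vi i) j (vi j) = (N ^ 2)%:R.
  rewrite -hv quad_vec; apply: eq_bigr => i _; apply: eq_bigr => j _.
  rewrite tri_entry /bil; apply: eq_bigr => a _; apply: eq_bigr => b _; by rewrite !mxE.
have q0 i j : bil M i (vi i) i (vi i) - bil M i (vi i) j (vi j)
   - bil M j (vi j) i (vi i) + bil M j (vi j) j (vi j) = 0.
  pose qq i j := bil M i (vi i) i (vi i) - bil M i (vi i) j (vi j)
   - bil M j (vi j) i (vi i) + bil M j (vi j) j (vi j).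
  have qge i' j' : 0 <= qq i' j' by rewrite /qq -quad_dv; apply: pM.
  have qs : \sum_i \sum_j qq i j = 0.
    transitivity (\sum_i \sum_j (n i + n j) - 2%:R * \sum_i \sum_j bil M i (vi i) j (vi j)).
      rewrite mulr_sumr -sumrB; apply: eq_bigr => i' _.
      rewrite mulr_sumr -sumrB; apply: eq_bigr => j' _.
      by rewrite /qq !Bdiag (Bsym j') /n; ring.
    rewrite Bsum.
    under eq_bigr => i' _ do rewrite big_split /= sumr_const card_ord hn'.
    rewrite big_split /= sumr_const card_ord sumrMnl hn'.
    rewrite -(mulr_natr (N%:R : R) N) natrX; ring.
  have := psumr_eq0P (P := xpredT) (fun i _ => sumr_ge0 _ (fun j _ => qge i j)) qs.
  move=> /(_ i isT) h.
  exact: (psumr_eq0P (P := xpredT) (fun j _ => qge i j) h).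
have KEY i j a : \sum_b M (mxvec_index i a) (mxvec_index j b) * V b j = V a i.
  by have := zero_dv sM pM (q0 i j) i a; rewrite coll.
have nB i j : n i = bil M i (vi i) j (vi j).
  rewrite /n /bil /vi; apply: eq_bigr => a _.
  rewrite expr2 -{2}(KEY i j a) mulr_sumr; apply: eq_bigr => b _; ring.
have n1 i : n i = 1.
  have E : \sum_j n j = n i *+ N.
    rewrite -[in RHS](card_ord N) -sumr_const; apply: eq_bigr => j _.
    by rewrite (nB j i) Bsym -nB.
  have N0 : (N%:R : R) != 0 by rewrite pnatr_eq0 -lt0n (leq_ltn_trans _ (ltn_ord i)).
  apply: (mulIf N0); rewrite mul1r mulr_natr -E.
  exact: hn'.
have KEY2 j k l a : \sum_b M (mxvec_index j a) (mxvec_index k b) * V b l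
                 = \sum_b M (mxvec_index j a) (mxvec_index l b) * V b k.
  apply: (zero_dv sM pM (i := k) (u := vi l) (j := l) (w := vi k)).
  have C12 : bil M k (vi l) l (vi k) = 1.
    rewrite -(n1 l) /bil /n; apply: eq_bigr => a' _.
    transitivity (V a' l * \sum_b M (mxvec_index l a') (mxvec_index k b) * V b k).
      rewrite mulr_sumr; apply: eq_bigr => b _; rewrite Mblk Msym /vi; ring.
    by rewrite KEY expr2.
  by rewrite !Bdiag (Bsym l) C12 -/(n l) -/(n k) !n1; ring.
pose T i j k l := \sum_a V a i * \sum_b M (mxvec_index j a) (mxvec_index k b) * V b l.
have hT i j k l : Yent Y i j k l = T i j k l.
  rewrite hY tri_entry; apply: eq_bigr => a _; rewrite mulr_sumr.
  apply: eq_bigr => b _; rewrite !mxE; ring.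
have h23 y0 y1 y2 y3 : Yent Y y0 y1 y2 y3 = Yent Y y0 y1 y3 y2.
  by rewrite !hT /T; apply: eq_bigr => a _; rewrite KEY2.
have h12 y0 y1 y2 y3 : Yent Y y0 y1 y2 y3 = Yent Y y0 y2 y1 y3.
  rewrite !hT /T; apply: eq_bigr => a _; congr (_ * _); apply: eq_bigr => b _.
  by rewrite Mblk Msym.
have h03 y0 y1 y2 y3 : Yent Y y0 y1 y2 y3 = Yent Y y3 y1 y2 y0.
  rewrite !hT /T.
  under eq_bigr => a _ do rewrite mulr_sumr.
  under [RHS]eq_bigr => a _ do rewrite mulr_sumr.
  rewrite exchange_big; apply: eq_bigr => b _; apply: eq_bigr => a _.
  rewrite Mblk; ring.
have h13 y0 y1 y2 y3 : Yent Y y0 y1 y2 y3 = Yent Y y0 y3 y2 y1.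
  by rewrite h12 h23 h12.
have h01 y0 y1 y2 y3 : Yent Y y0 y1 y2 y3 = Yent Y y1 y0 y2 y3.
  by rewrite h03 h13 h03.
have h02 y0 y1 y2 y3 : Yent Y y0 y1 y2 y3 = Yent Y y2 y1 y0 y3.
  by rewrite h03 h23 h03.
have Tkk i j k : T i j k k = \sum_a V a i * V a j.
  by apply: eq_bigr => a _; rewrite KEY.
split; last first.
  move=> o i j _; rewrite h01 hT /T mxE; apply: eq_bigr => a _.
  by rewrite coll mxE.
split.
- have -> : Y = (Smx V)^T *m M *m Smx V.
    apply/matrixP => x y; case/mxvec_indexP: x => i j; case/mxvec_indexP: y => k l.
    rewrite E2; have -> : Y (mxvec_index i j) (mxvec_index k l) = Yent Y i j l k.
      by rewrite h23.
    rewrite hT /T; apply: eq_bigr => a _; rewrite mulr_sumr; apply: eq_bigr => b _; ring.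
  exact: psd_congr.
- by move=> i j k k'; rewrite !hT !Tkk.
- by move=> i; rewrite hT Tkk -(n1 i); apply: eq_bigr => a _; rewrite expr2.
- exact: (perm_sym4 h01 h02 h03 h12 h13 h23).
Qed.

Lemma colmul (R : rcfType) m n p (Z : 'M[R]_(m, n)) (C : 'M_(n, p)) i q :
  (Z *m col q C) i 0 = (Z *m C) i q.
Proof. by rewrite !mxE; apply: eq_bigr => k _; rewrite !mxE. Qed.

Lemma subker (R : rcfType) m1 m2 n (Z : 'M[R]_(m1, n)) (X : 'M[R]_(m2, n)) :
  (forall c : 'cV_n, X *m c = 0 -> Z *m c = 0) -> (Z <= X)%MS.
Proof.
move=> H; rewrite submxE; apply/eqP/matrixP => i q.
have := H (col q (cokermx X)).
have -> : X *m col q (cokermx X) = 0.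
  by apply/matrixP => a b; rewrite ord1 colmul mulmx_coker !mxE.
by move=> /(_ erefl) /matrixP /(_ i 0); rewrite colmul !mxE.
Qed.

Lemma fl_i4 N (y0 y1 y2 y3 : 'I_N) k : (k < 4)%N ->
  nth y0 [:: y0; y1; y2; y3] (i4 k) = nth y0 [:: y0; y1; y2; y3] k.
Proof. by move=> hk; rewrite /i4 inordK. Qed.

Lemma Ytp (R : rcfType) N (Y : 'M[R]_(N * N)) :
  (forall (f : 'I_4 -> 'I_N) (s : {perm 'I_4}),
         Yent Y (f (s (i4 0))) (f (s (i4 1))) (f (s (i4 2))) (f (s (i4 3)))
         = Yent Y (f (i4 0)) (f (i4 1)) (f (i4 2)) (f (i4 3))) ->
  forall a b, (a < 4)%N -> (b < 4)%N -> forall y0 y1 y2 y3,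
  Yent Y (nth y0 [:: y0; y1; y2; y3] (tperm (i4 a) (i4 b) (i4 0)))
         (nth y0 [:: y0; y1; y2; y3] (tperm (i4 a) (i4 b) (i4 1)))
         (nth y0 [:: y0; y1; y2; y3] (tperm (i4 a) (i4 b) (i4 2)))
         (nth y0 [:: y0; y1; y2; y3] (tperm (i4 a) (i4 b) (i4 3)))
  = Yent Y y0 y1 y2 y3.
Proof.
move=> H a b ha hb y0 y1 y2 y3.
have := H (fun x : 'I_4 => nth y0 [:: y0; y1; y2; y3] x) (tperm (i4 a) (i4 b)).
by move=> /= ->; rewrite !fl_i4.
Qed.

Lemma Ysyms (R : rcfType) N (Y : 'M[R]_(N * N)) : pseudomoment Y ->
  [/\ forall y0 y1 y2 y3, Yent Y y0 y1 y2 y3 = Yent Y y2 y1 y0 y3,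
      forall y0 y1 y2 y3, Yent Y y0 y1 y2 y3 = Yent Y y0 y3 y2 y1,
      forall y0 y1 y2 y3, Yent Y y0 y1 y2 y3 = Yent Y y3 y1 y2 y0,
      forall y0 y1 y2 y3, Yent Y y0 y1 y2 y3 = Yent Y y0 y2 y1 y3 &
      forall y0 y1 y2 y3, Yent Y y0 y1 y2 y3 = Yent Y y0 y1 y3 y2].
Proof.
case=> _ _ _ H; split=> y0 y1 y2 y3.
- by rewrite -(Ytp H (a := 0) (b := 2) isT isT y2 y1 y0 y3) !tp_i4 //= !fl_i4.
- by rewrite -(Ytp H (a := 1) (b := 3) isT isT y0 y3 y2 y1) !tp_i4 //= !fl_i4.
- by rewrite -(Ytp H (a := 0) (b := 3) isT isT y3 y1 y2 y0) !tp_i4 //= !fl_i4.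
- by rewrite -(Ytp H (a := 1) (b := 2) isT isT y0 y2 y1 y3) !tp_i4 //= !fl_i4.
- by rewrite -(Ytp H (a := 2) (b := 3) isT isT y0 y1 y3 y2) !tp_i4 //= !fl_i4.
Qed.

Lemma trE (R : rcfType) m n (A : 'M[R]_(m, n)) i j : A^T i j = A j i.
Proof. by rewrite mxE. Qed.
Lemma trD (R : rcfType) m n (A B : 'M[R]_(m, n)) : (A + B)^T = A^T + B^T.
Proof. by apply/matrixP => i j; rewrite !mxE. Qed.
Lemma trB (R : rcfType) m n (A B : 'M[R]_(m, n)) : (A - B)^T = A^T - B^T.
Proof. by apply/matrixP => i j; rewrite !mxE. Qed.
Lemma blkE (R : rcfType) N r (M : 'M[R]_(N * r)) j k a b :
  blk M j k a b = M (mxvec_index j a) (mxvec_index k b).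
Proof. by rewrite mxE. Qed.
Lemma psd1 (R : rcfType) n : psd (1%:M : 'M[R]_n).
Proof.
move=> x; rewrite mulmx1 mxE; apply: sumr_ge0 => i _; by rewrite mxE -expr2 sqr_ge0.
Qed.

Lemma quad_w (R : rcfType) N (Y : 'M[R]_(N * N)) (k : 'I_N) (c : 'cV[R]_N) :
  let w := \col_p (((up p).1 == k)%:R * c (up p).2 0) in
  (w^T *m Y *m w) 0 0 = \sum_l \sum_l' c l 0 * Yent Y k l k l' * c l' 0.
Proof.
move=> w; rewrite tri_entry sum_pair.
transitivity (\sum_p \sum_l (p == k)%:R * (\sum_q \sum_l' (q == k)%:R *
    (c l 0 * Y (mxvec_index p l) (mxvec_index q l') * c l' 0))).
  apply: eq_bigr => p _; apply: eq_bigr => l _; rewrite sum_pair mulr_sumr.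
  apply: eq_bigr => q _; rewrite mulr_sumr; apply: eq_bigr => l' _.
  rewrite !mxE !upE /=; ring.
rewrite sum_delta2; apply: eq_bigr => l _; by rewrite sum_delta2.
Qed.

Lemma mul_w (R : rcfType) N (Y : 'M[R]_(N * N)) (k : 'I_N) (c : 'cV[R]_N) i j :
  let w := \col_p (((up p).1 == k)%:R * c (up p).2 0) in
  (Y *m w) (mxvec_index i j) 0 = \sum_l Yent Y i j k l * c l 0.
Proof.
move=> w; rewrite mxE sum_pair.
transitivity (\sum_q \sum_l (q == k)%:R * (Y (mxvec_index i j) (mxvec_index q l) * c l 0)).
  apply: eq_bigr => q _; apply: eq_bigr => l _; rewrite !mxE !upE /=; ring.
by rewrite sum_delta2.
Qed.

Lemma partA (R : rcfType) N r (V : 'M[R]_(r, N)) (Y : 'M[R]_(N * N)) :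
  pseudomoment Y -> extends Y (V^T *m V) ->
  \sum_(i < N) \sum_(a < r) V a i ^+ 2 = N%:R /\
  exists M : 'M[R]_(N * r),
    [/\ inB M, ((vecV V)^T *m M *m vecV V) 0 0 = (N ^ 2)%:R &
        forall i j k l : 'I_N,
          Yent Y i j k l = ((col i V)^T *m blk M j k *m col l V) 0 0].
Proof.
move=> pY hext; have [s02 s13 s03 s12 s23] := Ysyms pY.
case: pY => pY c2 c3 _.
set X := V^T *m V.
have Ysym : Y^T = Y.
  apply/matrixP => x y; rewrite trE.
  case/mxvec_indexP: x => i j; case/mxvec_indexP: y => k l.
  by rewrite -[LHS]/(Yent Y k l i j) s02 s13.
have one k i : Yent Y k i k i = 1 by rewrite s12 (c2 _ _ _ k) c3.
have ZjjX j i l : Yent Y i j j l = X i l.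
  have o0 : (0 < N)%N by apply: (leq_ltn_trans _ (ltn_ord i)).
  pose o := Ordinal o0.
  rewrite s13 (c2 _ _ _ o) s02 s13 s12; exact: hext.
have Xsym : X^T = X by rewrite /X trmx_mul trmxK.
have Vker (c : 'cV_N) : X *m c = 0 -> V *m c = 0.
  move=> Xc; apply: sqr0.
  have -> : (V *m c)^T *m (V *m c) = c^T *m (X *m c) by rewrite trmx_mul !mulmxA.
  by rewrite Xc mulmx0 mxE.
have hext' k l l' : Yent Y k l k l' = X l l'.
  have o0 : (0 < N)%N by apply: (leq_ltn_trans _ (ltn_ord k)).
  pose o := Ordinal o0.
  rewrite s12 s02 s13 (c2 _ _ _ o) s02 s13 s12; exact: hext.
have Xii i : X i i = \sum_a V a i ^+ 2.
  by rewrite /X mxE; apply: eq_bigr => a _; rewrite mxE expr2.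
have hX : V^T *m V = X by [].
clearbody X.
have [DV hDV] : exists DV, V = DV *m X by apply/submxP; apply: subker.
set G := pinvmx X.
have XGX : X *m (G *m X) = X by rewrite mulmxA mulmxKpV // submx_refl.
clearbody G.
have XGtX : X *m (G^T *m X) = X.
  have := congr1 trmx XGX; rewrite !trmx_mul Xsym => h.
  by rewrite mulmxA.
have VGX : V *m G *m X = V by rewrite {1}hDV -!mulmxA XGX -hDV.
have VGtX : V *m G^T *m X = V by rewrite {1}hDV -!mulmxA XGtX -hDV.
have XGtX' : V *m (G^T *m X) = V by rewrite mulmxA VGtX.
set Pi := V *m G *m V^T.
have PiV : Pi *m V = V by rewrite /Pi -mulmxA hX VGX.
have PitE : Pi^T = V *m G^T *m V^T by rewrite /Pi !trmx_mul trmxK mulmxA.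
have PiPit : Pi *m Pi^T = Pi^T by rewrite {1}PitE !mulmxA PiV -PitE.
have Pisym : Pi^T = Pi.
  have := congr1 trmx PiPit; rewrite trmx_mul trmxK => h.
  by rewrite -PiPit h.
have PiPi : Pi *m Pi = Pi by rewrite -{2}Pisym PiPit Pisym.
set Q := 1%:M - Pi.
have Qsym : Q^T = Q by rewrite /Q trB trmx1 Pisym.
have QV : Q *m V = 0 by rewrite /Q mulmxBl mul1mx PiV subrr.
have QQ : Q^T *m 1%:M *m Q = Q.
  rewrite mulmx1 Qsym /Q mulmxBl !mulmxBr !mul1mx !mulmx1 PiPi.
  by rewrite subrr subr0.
have psdQ : psd Q by rewrite -QQ; apply: psd_congr; apply: psd1.
pose Zm (j k : 'I_N) : 'M[R]_N := \matrix_(i, l) Yent Y i j k l.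
have ZE j k i l : Zm j k i l = Yent Y i j k l by rewrite mxE.
have Zsym j k : (Zm j k)^T = Zm j k.
  by apply/matrixP => i l; rewrite trE !ZE s03.
have Zswap j k : Zm k j = Zm j k by apply/matrixP => i l; rewrite !ZE s12.
have Zker j k (c : 'cV_N) : V *m c = 0 -> Zm j k *m c = 0.
  move=> Vc.
  pose w := \col_p (((up p).1 == k)%:R * c (up p).2 0) : 'cV[R]_(N * N).
  have qw : (w^T *m Y *m w) 0 0 = 0.
    rewrite quad_w.
    transitivity ((c^T *m X *m c) 0 0).
      rewrite tri_entry; apply: eq_bigr => l _; apply: eq_bigr => l' _.
      by rewrite hext'.
    by rewrite -hX !mulmxA -mulmxA -trmx_mul Vc mulmx0 mxE.
  have Yw := ker_psd Ysym pY qw.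
  apply/matrixP => i q; rewrite ord1 [RHS]mxE.
  have h := congr1 (fun m : 'cV[R]_(N * N) => m (mxvec_index i j) 0) Yw.
  rewrite /= mul_w [RHS]mxE in h; rewrite -h.
  by rewrite mxE; apply: eq_bigr => l _; rewrite ZE.
have ZGX j k : Zm j k *m G *m X = Zm j k.
  have [DZ hDZ] : exists DZ, Zm j k = DZ *m X.
    by apply/submxP; apply: subker => c Xc; apply: Zker; apply: Vker.
  by rewrite {1}hDZ -!mulmxA XGX -hDZ.
have XGZ j k : X *m G^T *m Zm j k = Zm j k.
  have := congr1 trmx (ZGX j k); rewrite !trmx_mul Zsym Xsym => h.
  by rewrite -{2}h mulmxA.
set L := G *m V^T.
have LV : L *m V = G *m X by rewrite /L -mulmxA hX.
have ZVV j k : V^T *m (L^T *m Zm j k *m L) *m V = Zm j k.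
  have -> : V^T *m (L^T *m Zm j k *m L) *m V = (L *m V)^T *m Zm j k *m (L *m V).
    by rewrite [(L *m V)^T]trmx_mul !mulmxA.
  by rewrite LV trmx_mul Xsym XGZ mulmxA ZGX.
have LXL : L^T *m X *m L = Pi.
  by rewrite /L trmx_mul trmxK !mulmxA -(mulmxA V) XGtX'.
clearbody L.
pose M := Smx L^T *m Y *m (Smx L^T)^T + (Emx R N r)^T *m Q *m Emx R N r.
have ME j a k b : M (mxvec_index j a) (mxvec_index k b)
    = (L^T *m Zm j k *m L) a b + Q a b.
  rewrite addE E1 E3 tri_entry; congr (_ + _).
  apply: eq_bigr => i _; apply: eq_bigr => l _; by rewrite !trE ZE s23.
have blkM j k : blk M j k = L^T *m Zm j k *m L + Q.
  by apply/matrixP => a b; rewrite blkE ME [RHS]mxE.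
have AT j k : (L^T *m Zm j k *m L)^T = L^T *m Zm j k *m L.
  by rewrite !trmx_mul trmxK Zsym mulmxA.
have hvv j k : ((col j V)^T *m blk M j k *m col k V) 0 0 = 1.
  rewrite colform blkM mulmxDr mulmxDl ZVV -mulmxA QV mulmx0 addr0 ZE.
  by rewrite (c2 _ _ _ j) c3.
split.
  rewrite -[in RHS](card_ord N) -sumr_const; apply: eq_bigr => i _.
  by rewrite -Xii -(hext' i) one.
exists M; split.
- split.
  + apply/matrixP => x y; rewrite trE.
    case/mxvec_indexP: x => j a; case/mxvec_indexP: y => k b.
    by rewrite !ME Zswap -(trE (L^T *m _ *m L)) AT -(trE Q) Qsym.
  + apply: psdD; [exact: psd_congr' | exact: psd_congr].
  + move=> j; rewrite blkM.
    have -> : Zm j j = X by apply/matrixP => i l; rewrite ZE ZjjX.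
    by rewrite LXL /Q addrC subrK.
  + by move=> j k; rewrite blkM trD AT Qsym.
- rewrite quad_vec.
  transitivity (\sum_(j < N) \sum_(k < N) (1 : R)).
    by apply: eq_bigr => j _; apply: eq_bigr => k _; rewrite hvv.
  by rewrite sumr_const card_ord sumr_const card_ord -(mulr_natr (N%:R : R) N) natrX expr2.
- move=> i j k l.
  by rewrite colform blkM mulmxDr mulmxDl ZVV -mulmxA QV mulmx0 addr0 ZE.
Qed.
Unset Implicit Arguments.

Theorem theorem1 (R : rcfType) (N r : nat) (V : 'M[R]_(r, N)) :
  let X := V^T *m V in
  let v := vecV V in
  let sqnorms := \sum_(i < N) \sum_(a < r) V a i ^+ 2 in
  (E4 X <->
     (sqnorms = N%:R /\
      exists M : 'M[R]_(N * r), inB M /\ (v^T *m M *m v) 0 0 = (N ^ 2)%:R))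
  /\
  (forall Y : 'M[R]_(N * N), E4 X -> pseudomoment Y -> extends Y X ->
     exists M : 'M[R]_(N * r),
       [/\ inB M, (v^T *m M *m v) 0 0 = (N ^ 2)%:R &
           forall i j k l : 'I_N,
             Yent Y i j k l = ((col i V)^T *m blk M j k *m col l V) 0 0])
  /\
  (forall M : 'M[R]_(N * r),
     sqnorms = N%:R -> inB M -> (v^T *m M *m v) 0 0 = (N ^ 2)%:R ->
     forall Y : 'M[R]_(N * N),
       (forall i j k l : 'I_N,
          Yent Y i j k l = ((col i V)^T *m blk M j k *m col l V) 0 0) ->
       pseudomoment Y /\ extends Y X).
Proof.
cbv zeta.
split; [split|split].
- case=> _ [Y [pY ext]]; have [h1 [M [h2 h3 _]]] := partA pY ext.
  by split => //; exists M.
- case=> hn [M [iM hv]].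
  pose Y : 'M[R]_(N * N) := \matrix_(x, y)
    ((col (up x).1 V)^T *m blk M (up x).2 (up y).1 *m col (up y).2 V) 0 0.
  have hY i j k l : Yent Y i j k l = ((col i V)^T *m blk M j k *m col l V) 0 0.
    by rewrite /Yent mxE !upE.
  split; first by rewrite trmx_mul trmxK.
  exists Y; exact: (partB hn iM hv hY).
- move=> Y _ pY ext; have [_ [M [h2 h3 h4]]] := partA pY ext.
  by exists M.
- move=> M hn iM hv Y hY; exact: (partB hn iM hv hY).
Qed.
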